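(* Let $G$ be a graph with at least two vertices and let $k$ be an integer with $k\ge k(G)$. Then there exists an acyclic digraph $D$ such that (a) $C(D)=G\cup I_k$; (b) $D$ has an acyclic ordering $v_1,\dots,v_{|V(G)|},v_{|V(G)|+1},\dots,v_{|V(G)|+k}$ where $V(G)=\{v_1,\dots,v_{|V(G)|}\}$ and $V(I_k)=\{v_{|V(G)|+1},\dots,v_{|V(G)|+k}\}$; and (c) $N_D^-(v_1)=N_D^-(v_2)=\emptyset$.
   Context: All graphs are finite and simple. For a digraph $D$, its competition graph $C(D)$ is the graph with vertex set $V(D)$ in which two distinct vertices $u,v$ are adjacent iff there is a vertex $x$ with arcs $(u,x),(v,x)\in A(D)$. The competition number $k(G)$ is the smallest nonnegative integer $k$ such that $G$ together with $k$ new isolated vertices is the competition graph of an acyclic digraph. $I_k$ denotes the edgeless graph on $k$ vertices, and $G\cup I_k$ is the disjoint union of $G$ with $k$ new isolated vertices. An acyclic ordering of a digraph $D$ is an ordering $v_1,\dots,v_{|V(D)|}$ of its vertices such that $(v_i,v_j)\in A(D)$ implies $i<j$. $N_D^-(v)=\{x:(x,v)\in A(D)\}$ is the in-neighborhood. *)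

(* Defs.v *)
From mathcomp Require Import all_boot.

Set Implicit Arguments. Unset Strict Implicit. Unset Printing Implicit Defensive.

(* A (finite simple) graph on a finType T is a symmetric irreflexive
   relation e : rel T.  A digraph on a finType V is a relation D : rel V,
   with (u,v) an arc iff D u v. *)

Definition acyclic (V : finType) (D : rel V) : Prop :=
  forall x y : V, D x y -> ~~ connect D y x.

Definition compg (V : finType) (D : rel V) : rel V :=
  fun u v => (u != v) && [exists x, D u x && D v x].

Definition union_isol (T : finType) (e : rel T) (k : nat) : rel (T + 'I_k) :=
  fun u v => match u, v with inl a, inl b => e a b | _, _ => false end.

Arguments union_isol {T} e k u v.

Definition is_gvert (T : finType) (k : nat) (x : T + 'I_k) : bool :=
  if x is inl _ then true else false.

Definition comp_realizable (T : finType) (e : rel T) (k : nat) : Prop :=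
  exists D : rel (T + 'I_k), acyclic D /\ compg D =2 union_isol e k.

Definition is_competition_number (T : finType) (e : rel T) (n : nat) : Prop :=
  comp_realizable e n /\ forall j, comp_realizable e j -> n <= j.

(* Main.v *)
Require Import Defs.
From mathcomp Require Import all_boot.
From mathcomp Require Import zify.

Set Implicit Arguments. Unset Strict Implicit. Unset Printing Implicit Defensive.

Section Aux.
Variables (T : finType) (e : rel T) (kG k : nat) (hk : kG <= k).
Variable D0 : rel (T + 'I_kG).
Hypothesis D0acy : acyclic D0.
Hypothesis D0c : compg D0 =2 union_isol e kG.

Definition bigin (z : T + 'I_kG) := 1 < #|[pred y | D0 y z]|.

Definition newD : rel (T + 'I_k) := fun u w =>
  match u with
  | inl a => match w with
    | inl b => D0 (inl a) (inl b) && bigin (inl b)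
    | inr j => [exists j' : 'I_kG, (val j' == val j) && D0 (inl a) (inr j') && bigin (inr j')]
    end
  | inr _ => false end.

Definition h (x : T) := #|[pred y : T | connect D0 (inl y) (inl x)]|.

Lemma h_lt a b : D0 (inl a) (inl b) -> h a < h b.
Proof.
move=> Dab; apply: proper_card; rewrite properE; apply/andP; split.
  apply/subsetP => y; rewrite !inE => Hy.
  apply: connect_trans Hy _; exact: connect1.
apply/subsetP => /(_ b); rewrite !inE connect0 => /(_ isT).
by move: (D0acy Dab) => /negP.
Qed.

Lemma two_in (z : T + 'I_kG) x1 x2 : x1 != x2 -> D0 x1 z -> D0 x2 z -> bigin z.
Proof.
move=> ne d1 d2; rewrite /bigin.
have <- : #|[set x1; x2]| = 2 by rewrite cards2 ne.
apply: subset_leq_card; apply/subsetP => y; rewrite !inE.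
by case/orP => /eqP ->.
Qed.

Lemma compg_new : compg newD =2 union_isol e k.
Proof.
move=> [a|i] [b|j]; rewrite /compg /=; last first.
- by rewrite [X in _ && X](_ : _ = false) ?andbF //; apply/negbTE/existsPn.
- by apply/negbTE/existsPn.
- by apply/negbTE/existsPn => x; rewrite andbF.
have := D0c (inl a) (inl b); rewrite /compg /= => <-.
case: (eqVneq a b) => [->|nab]; [by rewrite !eqxx|].
have nab' : (inl a : T + 'I_kG) != inl b by apply: contra nab => /eqP [->].
rewrite nab' /=.
apply/existsP/existsP => -[x].
  case: x => [c|jj] /=.
    by case/andP => /andP[d1 _] /andP[d2 _]; exists (inl c); rewrite d1 d2.
  case/andP => /existsP[j1 /andP[/andP[/eqP e1 d1] _]] /existsP[j2 /andP[/andP[/eqP e2 d2] _]].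
  have ej : j1 = j2 by apply: ord_inj; rewrite e1 e2.
  by exists (inr j1); rewrite d1 ej d2.
move=> /andP[d1 d2]; have bz := two_in nab' d1 d2.
case: x d1 d2 bz => [c|jj] d1 d2 bz.
  by exists (inl c); rewrite /= d1 d2 bz.
have jk : jj < k by apply: leq_trans hk.
exists (inr (Ordinal jk)) => /=; apply/andP; split; apply/existsP; exists jj;
  by rewrite eqxx /= ?d1 ?d2 bz.
Qed.

Definition pot (x : T + 'I_k) := if x is inl a then h a else #|T|.+1.

Lemma pot_lt x y : newD x y -> pot x < pot y.
Proof.
case: x => [a|i] //; case: y => [b|j] /=.
  by case/andP => /h_lt.
by move=> _; rewrite ltnS /h max_card.
Qed.

Lemma pot_acyclic (V : finType) (R : rel V) (r : V -> nat) :
  (forall x y, R x y -> r x < r y) -> acyclic R.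
Proof.
move=> Hr x y Rxy; apply/negP => /connectP [p pth eq].
have : r y <= r (last y p).
  elim: p y pth {Rxy eq} => [|z p IH] y //= /andP[Ryz pz].
  exact: leq_trans (ltnW (Hr _ _ Ryz)) (IH _ pz).
by rewrite -eq; have := Hr _ _ Rxy; lia.
Qed.

Lemma newD_acyclic : acyclic newD.
Proof. exact: pot_acyclic pot_lt. Qed.

Variable t0 : T.
Hypothesis hT : 2 <= #|T|.

Definition leh := fun x y => h x <= h y.
Definition ss := sort leh (enum T).
Definition LL : seq (T + 'I_k) := map inl ss ++ map inr (enum 'I_k).

Lemma size_ss : size ss = #|T|.
Proof. by rewrite size_sort -cardE. Qed.

Lemma size_LL : size LL = #|T| + k.
Proof. by rewrite size_cat !size_map size_ss -enumT size_enum_ord. Qed.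

Lemma uniq_LL : uniq LL.
Proof.
rewrite cat_uniq; apply/and3P; split.
- by rewrite map_inj_uniq ?sort_uniq ?enum_uniq // => ?? [].
- by apply/hasPn => x /mapP[j _ ->]; apply/negP => /mapP[y _].
- rewrite map_inj_uniq; last by move=> ?? [].
  by rewrite enum_uniq.
Qed.

Lemma sorted_ss : sorted leh ss.
Proof. by apply: sort_sorted => x y; rewrite /leh leq_total. Qed.

Lemma sorted_idx i p : i < size ss -> p < size ss ->
  h (nth t0 ss p) < h (nth t0 ss i) -> p < i.
Proof.
move=> hi hp hlt; rewrite ltnNge; apply/negP => ip.
have tr : transitive leh by move=> ???; apply: leq_trans.
have rf : reflexive leh by move=> ?; apply: leqnn.
have := sorted_leq_nth tr rf t0 sorted_ss i p hi hp ip.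
by rewrite /leh; move: hlt; lia.
Qed.


Lemma vG i : i < #|T| -> nth (inl t0) LL i = inl (nth t0 ss i).
Proof. by move=> hi; rewrite nth_cat size_map size_ss hi (nth_map t0) // size_ss. Qed.

Lemma vI i : #|T| <= i -> i < #|T| + k -> exists j, nth (inl t0) LL i = inr j.
Proof.
move=> h1 h2; rewrite nth_cat size_map size_ss ltnNge h1 /=.
have : nth (inl t0) [seq inr j | j <- enum 'I_k] (i - #|T|) \in [seq inr j | j <- enum 'I_k].
  by apply: mem_nth; rewrite size_map size_enum_ord; lia.
by case/mapP => j _ ->; exists j.
Qed.

Lemma v_lt i j : i < #|T| + k -> j < #|T| + k ->
  newD (nth (inl t0) LL i) (nth (inl t0) LL j) -> i < j.
Proof.
move=> hi hj.
case: (ltnP j #|T|) => hjT; last first.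
  case: (ltnP i #|T|) => hiT; first by move=> _; lia.
  by have [i' ->] := vI hiT hi.
rewrite (vG hjT).
case: (ltnP i #|T|) => hiT; last by have [i1 ->] := vI hiT hi.
rewrite (vG hiT) /= => /andP[/h_lt hl _].
by apply: sorted_idx hl; rewrite size_ss.
Qed.

Lemma v_top i : i < 2 -> forall y, ~~ newD y (nth (inl t0) LL i).
Proof.
move=> i2 y; have iT : i < #|T| by lia.
rewrite vG //; case: y => [a|//] /=; apply/negP => /andP[_].
move=> /card_gt1P [y1 [y2 [d1 d2 ne]]]; rewrite !inE in d1 d2.
have := D0c y1 y2; rewrite /compg ne /=.
have -> : [exists x, D0 y1 x && D0 y2 x] by apply/existsP; exists (inl (nth t0 ss i)); rewrite d1 d2.
case: y1 d1 ne => [a1|//] d1; case: y2 d2 => [a2|//] d2 ne _.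
have m1 : a1 \in ss by rewrite mem_sort mem_enum.
have m2 : a2 \in ss by rewrite mem_sort mem_enum.
have p1 : index a1 ss < i.
  apply: sorted_idx; [by rewrite size_ss | by rewrite index_mem | ].
  by rewrite nth_index //; apply: h_lt.
have p2 : index a2 ss < i.
  apply: sorted_idx; [by rewrite size_ss | by rewrite index_mem | ].
  by rewrite nth_index //; apply: h_lt.
have : index a1 ss != index a2 ss.
  by apply: contra ne => /eqP/(congr1 (nth t0 ss)); rewrite !nth_index // => ->.
lia.
Qed.

End Aux.

Theorem lemma2p2 (T : finType) (e : rel T)
  (e_sym : symmetric e) (e_irr : irreflexive e) (hT : 2 <= #|T|)
  (kG k : nat) (hkG : is_competition_number e kG) (hk : kG <= k) :
  exists D : rel (T + 'I_k),
    [/\ acyclic D,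
        compg D =2 union_isol e k &
        exists v : 'I_(#|T| + k) -> T + 'I_k,
          [/\ bijective v,
              (forall i : 'I_(#|T| + k), (i < #|T|) = is_gvert (v i)),
              (forall i j : 'I_(#|T| + k), D (v i) (v j) -> i < j) &
              (forall i : 'I_(#|T| + k), i < 2 -> forall y, ~~ D y (v i))]].
Proof.
case: hkG => [[D0 [acy Dc]] _].
have /card_gt0P [t0 _] : 0 < #|T| by lia.
exists (@newD _ _ k D0); split; first exact: newD_acyclic.
  exact: compg_new.
exists (fun i : 'I_(#|T| + k) => nth (inl t0) (@LL _ _ k D0) i); split.
- have inj : injective (fun i : 'I_(#|T| + k) => nth (inl t0) (LL k D0) i).
    move=> i j /eqP; rewrite nth_uniq ?size_LL ?uniq_LL // => /eqP; exact: ord_inj.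
  apply: (inj_card_bij inj); have := card_sum T (ordinal k); rewrite !card_ord => <-; exact: leqnn.
- move=> i; case: (ltnP i #|T|) => hi.
    by rewrite (vG k D0 t0 hi).
  by have [j ->] := vI hk D0 t0 hT hi (ltn_ord i).
- by move=> i j; apply: (v_lt hk acy hT); exact: ltn_ord.
- by move=> i i2 y; apply: (v_top hk acy Dc t0 hT).
Qed.
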